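(* Under the standing assumptions in the context, with $h^E$, $h^S$ defined as there, for all $r\in[r_0,r_1]$, $$0\le h^S(r)-h^E(r)\le \frac{g}{u_0^2-g h_0}\,\big(h^E(r)\big)^2\,\big(1-\nu(r)\big).$$ In particular there is a constant $c>0$ (namely $c=g/(u_0^2-gh_0)$) with $h^S(r)-h^E(r)\le c\,(h^E(r))^2(1-\nu(r))$ for all $r\in[r_0,r_1]$.
   Context: Standing assumptions and notation. Let $g>0$, $0<r_0<r_1$, and let $f\in C^1([r_0,r_1])$ with $f'(r)\le 0$ for all $r\in[r_0,r_1]$, $f'(r_0)=0$, and $f(r_0)>f(r_1)$. Set $\nu(r)=1/\sqrt{1+(f'(r))^2}$. Let $h_0>0$, $u_0>0$ with $u_0^2/(g h_0)>1$. Define $q_e=\tfrac12 u_0^2+g\,(f(r_0)+h_0)$, $q_w=r_0h_0u_0$, $\eta(r)=q_e-g f(r)$, and $$\mathcal P^S_r(h)=g h^3-\eta(r)h^2+\frac{q_w^2}{2r^2},\qquad \mathcal P^E_r(h)=g\,\nu(r)\, h^3-\eta(r)h^2+\frac{q_w^2}{2r^2}.$$ Let $\nu^S(r)=1$, $\nu^E(r)=\nu(r)$, $h^M_\star(r)=\dfrac{2\eta(r)}{3g\,\nu^M(r)}$ for $M\in\{E,S\}$. For each $r\in[r_0,r_1]$ and $M\in\{E,S\}$, $h^M(r)$ denotes the unique root of $\mathcal P^M_r$ in the interval $(0,h^M_\star(r))$ (this root exists and $h^M$ is continuous with $h^M(r_0)=h_0$). *)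

(* Defs.v *)
From Stdlib Require Import Reals.
From Coquelicot Require Import Coquelicot.
Open Scope R_scope.

Definition nu (df : R -> R) (r : R) : R := 1 / sqrt (1 + (df r)^2).

Definition qe (g u0 h0 f0 : R) : R := 1/2 * u0^2 + g * (f0 + h0).
Definition qw (r0 h0 u0 : R) : R := r0 * h0 * u0.
Definition eta (g u0 h0 r0 : R) (f : R -> R) (r : R) : R :=
  qe g u0 h0 (f r0) - g * f r.

(* P^M_r(h) = g nuM h^3 - eta(r) h^2 + q_w^2/(2 r^2); nuM = 1 (S) or nu(r) (E) *)
Definition Ppoly (g u0 h0 r0 : R) (f : R -> R) (nuM : R) (r h : R) : R :=
  g * nuM * h^3 - eta g u0 h0 r0 f r * h^2 + (qw r0 h0 u0)^2 / (2 * r^2).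

Definition hstar (g u0 h0 r0 : R) (f : R -> R) (nuM : R) (r : R) : R :=
  2 * eta g u0 h0 r0 f r / (3 * g * nuM).

Definition is_root_branch (g u0 h0 r0 r1 : R) (f : R -> R) (nuM : R -> R)
  (hM : R -> R) : Prop :=
  forall r, r0 <= r <= r1 ->
    0 < hM r < hstar g u0 h0 r0 f (nuM r) r /\
    Ppoly g u0 h0 r0 f (nuM r) r (hM r) = 0.

(* Main.v *)
Require Import Defs.
From Stdlib Require Import Reals.
From Coquelicot Require Import Coquelicot.
From Stdlib Require Import Lra Psatz.
Open Scope R_scope.

Lemma fac_pos (k eta x y : R) : 0 < k -> 0 < x -> x < y -> y < 2 * eta / (3 * k) ->
  eta * (x + y) - k * (x^2 + x*y + y^2) > 0.
Proof.
  intros Hk Hx Hxy Hy.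
  assert (H3 : 3 * k * y < 2 * eta).
  { apply (Rmult_lt_compat_l (3*k)) in Hy; [|lra].
    replace (3 * k * (2 * eta / (3 * k))) with (2*eta) in Hy by (field; lra). lra. }
  assert (k*(x^2+x*y+y^2) <= k * (3/2) * y * (x+y)).
  { assert (0 <= (3/2)*y*(x+y) - (x^2+x*y+y^2)) by nra. nra. }
  nra.
Qed.

Lemma key (g a h0 eta Q nu s e : R) : 0 < g -> 0 < h0 -> a > g * h0 -> 0 < nu <= 1 ->
  eta >= a/2 + g*h0 -> Q <= h0^2 * a / 2 ->
  0 < s < 2*eta/(3*g*1) -> g*1*s^3 - eta*s^2 + Q = 0 ->
  0 < e < 2*eta/(3*g*nu) -> g*nu*e^3 - eta*e^2 + Q = 0 ->
  0 <= s - e /\ s - e <= g / (a - g*h0) * e^2 * (1 - nu).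
Proof.
  intros Hg Hh0 Ha Hnu Heta HQ [Hs0 Hs1] HPs [He0 He1] HPe.
  replace (3*g*1) with (3*(g*1)) in Hs1 by ring.
  replace (3*g*nu) with (3*(g*nu)) in He1 by ring.
  assert (Hsh0 : s <= h0).
  { destruct (Rle_lt_dec s h0) as [|Hlt]; [lra|exfalso].
    assert (Hs1' : s < 2 * eta / (3 * g)) by (replace (g*1) with g in Hs1 by ring; exact Hs1).
    pose proof (fac_pos g eta h0 s Hg Hh0 Hlt Hs1') as F.
    assert (P0 : g*h0^3 - eta*h0^2 + Q <= 0).
    { assert (eta*h0^2 >= (a/2+g*h0)*h0^2) by nra. nra. }
    assert (Ediff : (g*h0^3 - eta*h0^2 + Q) - (g*1*s^3 - eta*s^2 + Q)
       = (s - h0) * (eta * (h0 + s) - g * (h0^2 + h0*s + s^2))) by ring.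
    nra. }
  assert (Hes : e <= s).
  { destruct (Rle_lt_dec e s) as [|Hlt]; [lra|exfalso].
    assert (Hk : 0 < g*nu) by nra.
    pose proof (fac_pos (g*nu) eta s e Hk Hs0 Hlt He1) as F.
    assert (Ediff : (g*nu*s^3 - eta*s^2 + Q) - (g*nu*e^3 - eta*e^2 + Q)
       = (e - s) * (eta * (s + e) - (g*nu) * (s^2 + s*e + e^2))) by ring.
    assert (0 <= g*(1-nu)*s^3) by (apply Rmult_le_pos; [nra| apply pow_le; lra]).
    nra. }
  split; [lra|].
  set (D := eta * (s + e) - g * (s^2 + s*e + e^2)).
  assert (HD : (s - e) * D = g * (1 - nu) * e^3).
  { unfold D.
    assert (E1 : (s - e) * (eta * (s + e) - g * (s ^ 2 + s * e + e ^ 2))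
      = (g*nu*e^3 - eta*e^2 + Q) + g*(1-nu)*e^3 - (g*1*s^3 - eta*s^2 + Q)) by ring.
    rewrite E1, HPs, HPe. ring. }
  assert (HK : 0 < a - g*h0) by lra.
  assert (HDK : D >= e * (a - g*h0)).
  { unfold D.
    assert (eta*(s+e) >= (a/2+g*h0)*(s+e)).
    { apply Rle_ge, Rmult_le_compat_r; lra. }
    assert (a/2*(s-e) >= g*h0/2*(s-e)).
    { apply Rle_ge, Rmult_le_compat_r; lra. }
    assert (s^2 <= h0*s) by (simpl; rewrite Rmult_1_r; apply Rmult_le_compat_r; lra).
    assert (e^2 <= h0*e) by (simpl; rewrite Rmult_1_r; apply Rmult_le_compat_r; lra).
    assert (s*e <= h0*e) by (apply Rmult_le_compat_r; lra).
    assert (g*(s^2+s*e+e^2) <= g*(h0*s + 2*h0*e)) by (apply Rmult_le_compat_l; lra).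
    assert (g*(h0*(s-e)) >= 0) by (apply Rle_ge, Rmult_le_pos; [lra|]; apply Rmult_le_pos; lra).
    nra. }
  assert (Hm : (s - e) * (e * (a - g*h0)) <= g*(1-nu)*e^3) by nra.
  replace (g / (a - g * h0) * e ^ 2 * (1 - nu)) with (g*(1-nu)*e^3 / (e * (a - g*h0))) by (field; lra).
  apply Rmult_le_reg_r with (e * (a - g*h0)); [nra|].
  unfold Rdiv. rewrite Rmult_assoc, Rinv_l; [lra|nra].
Qed.

Theorem proposition1
  (g r0 r1 h0 u0 : R) (f df hE hS : R -> R)
  (Hg : 0 < g) (Hr0 : 0 < r0) (Hr01 : r0 < r1)
  (* f is C^1 on [r0,r1] with derivative df *)
  (Hder : forall r, r0 <= r <= r1 -> is_derive f r (df r))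
  (Hcont : forall r, r0 <= r <= r1 -> continuous df r)
  (Hdfle : forall r, r0 <= r <= r1 -> df r <= 0)
  (Hdf0 : df r0 = 0)
  (Hf : f r0 > f r1)
  (Hh0 : 0 < h0) (Hu0 : 0 < u0) (Hsup : u0^2 / (g * h0) > 1)
  (HS : is_root_branch g u0 h0 r0 r1 f (fun _ => 1) hS)
  (HE : is_root_branch g u0 h0 r0 r1 f (nu df) hE) :
  (forall r, r0 <= r <= r1 ->
     0 <= hS r - hE r /\
     hS r - hE r <= g / (u0^2 - g * h0) * (hE r)^2 * (1 - nu df r)) /\
  (exists c, 0 < c /\ c = g / (u0^2 - g * h0) /\
     forall r, r0 <= r <= r1 ->
       hS r - hE r <= c * (hE r)^2 * (1 - nu df r)).
Proof.
  assert (Ha : u0^2 > g*h0).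
  { assert (0 < g*h0) by nra.
    apply (Rmult_gt_compat_l (g*h0)) in Hsup; [|lra].
    replace (g * h0 * (u0 ^ 2 / (g * h0))) with (u0^2) in Hsup by (field; lra). lra. }
  assert (Hmain : forall r, r0 <= r <= r1 ->
     0 <= hS r - hE r /\
     hS r - hE r <= g / (u0^2 - g * h0) * (hE r)^2 * (1 - nu df r)).
  { intros r Hr.
    assert (Hfr : f r <= f r0).
    { destruct (Req_dec r r0) as [->|Hne]; [lra|].
      destruct (MVT_gen f r0 r df) as [c [Hc Hmvt]].
      - intros x Hx. apply Hder. unfold Rmin, Rmax in Hx.
        destruct (Rle_dec r0 r); lra.
      - intros x Hx. apply continuity_pt_filterlim. apply (ex_derive_continuous (K:=R_AbsRing) (V:=R_NormedModule)).
        eexists. apply Hder. unfold Rmin, Rmax in Hx. destruct (Rle_dec r0 r); lra.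
      - unfold Rmin, Rmax in Hc. destruct (Rle_dec r0 r); [|lra].
        assert (df c <= 0) by (apply Hdfle; lra). nra. }
    assert (Hnu : 0 < nu df r <= 1).
    { unfold nu. assert (1 <= sqrt (1 + df r ^ 2)).
      { assert (Hq : sqrt 1 <= sqrt (1 + df r ^ 2)) by (apply sqrt_le_1_alt; pose proof (pow2_ge_0 (df r)); lra). rewrite sqrt_1 in Hq. exact Hq. }
      split.
      - apply Rdiv_lt_0_compat; lra.
      - apply (Rmult_le_reg_r (sqrt (1 + df r ^ 2))); [lra|].
        unfold Rdiv. rewrite Rmult_assoc, Rinv_l; lra. }
    destruct (HS r Hr) as [HSb HSp]. destruct (HE r Hr) as [HEb HEp].
    unfold Ppoly, hstar in *.
    apply (key g (u0^2) h0 (eta g u0 h0 r0 f r) ((qw r0 h0 u0)^2/(2*r^2)) (nu df r)); auto.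
    - unfold eta, qe. nra.
    - unfold qw. apply (Rmult_le_reg_r (2*r^2)); [nra|].
      unfold Rdiv. rewrite Rmult_assoc, Rinv_l; [|nra].
      assert (Hr2 : r0^2 <= r^2) by (simpl; nra).
      assert (0 <= h0^2*u0^2) by (apply Rmult_le_pos; apply pow2_ge_0).
      assert (h0^2*u0^2*r0^2 <= h0^2*u0^2*r^2) by (apply Rmult_le_compat_l; lra).
      replace ((r0 * h0 * u0) ^ 2 * 1) with (h0^2*u0^2*r0^2) by ring.
      replace (h0 ^ 2 * u0 ^ 2 / 2 * (2 * r ^ 2)) with (h0^2*u0^2*r^2) by (field).
      lra.
  }
  split; [exact Hmain|].
  exists (g / (u0^2 - g*h0)). split; [apply Rdiv_lt_0_compat; lra|].
  split; [reflexivity|]. intros r Hr. apply Hmain; auto.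
Qed.
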